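(* If $X_1,\dots,X_m$ ($m\ge2$) are isentropic, then the source $X_{\mathcal M}$ is Type $\mathcal S$; that is, the singleton partition $\mathcal S$ attains $\min_{\mathcal P}\Delta(\mathcal P)$.
   Context: Let $\mathcal M=\{1,\dots,m\}$, and let $X_{\mathcal M}$ be jointly distributed finite-valued random variables, with $X_A=(X_i:i\in A)$. $X_1,\dots,X_m$ are isentropic if $H(X_A)=H(X_B)$ for all nonempty $A,B\subseteq\mathcal M$ with $|A|=|B|$. For a partition $\mathcal P$ of $\mathcal M$ with $|\mathcal P|\ge2$, $\Delta(\mathcal P)=\frac1{|\mathcal P|-1}[\sum_{A\in\mathcal P}H(X_A)-H(X_{\mathcal M})]$. $\mathcal S=\{\{1\},\dots,\{m\}\}$, and the source is Type $\mathcal S$ if $\mathcal S$ minimizes $\Delta$ over all partitions with at least two cells. *)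

(* Defs.v *)
From Stdlib Require Import Reals List Arith Bool.
Import ListNotations.
Open Scope R_scope.

(* A finite joint distribution of X_0,...,X_{m-1}: a finite list of atoms
   (probability, outcome), where outcome i is the value of X_i (encoded in nat).
   Every jointly distributed finite-valued family can be encoded this way. *)
Definition jdist := list (R * (nat -> nat)).

Definition sumR (l : list R) : R := fold_right Rplus 0 l.

Definition valid (d : jdist) : Prop :=
  Forall (fun a => 0 <= fst a) d /\ sumR (map fst d) = 1.

(* subsets of M = {0,...,m-1} are boolean predicates (only i < m matter) *)
Definition agree (m : nat) (A : nat -> bool) (f g : nat -> nat) : bool :=
  forallb (fun i => implb (A i) (Nat.eqb (f i) (g i))) (seq 0 m).

Definition prob (m : nat) (d : jdist) (A : nat -> bool) (f : nat -> nat) : R :=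
  sumR (map (fun a => if agree m A (snd a) f then fst a else 0) d).

(* Shannon entropy H(X_A) = - sum_v P(X_A=v) ln P(X_A=v)
   written as the expectation -E[ln P(X_A = X_A(omega))]; atoms of
   probability 0 contribute 0. *)
Definition H (m : nat) (d : jdist) (A : nat -> bool) : R :=
  - sumR (map (fun a => fst a * ln (prob m d A (snd a))) d).

Definition card (m : nat) (A : nat -> bool) : nat := length (filter A (seq 0 m)).

Definition isentropic (m : nat) (d : jdist) : Prop :=
  forall A B : nat -> bool,
    (0 < card m A)%nat -> card m A = card m B -> H m d A = H m d B.

(* A partition of M into k cells, given by a surjective labelling c : M -> {0..k-1};
   cell j = c^{-1}(j). *)
Definition is_partition (m k : nat) (c : nat -> nat) : Prop :=
  (forall i, (i < m)%nat -> (c i < k)%nat) /\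
  (forall j, (j < k)%nat -> exists i, (i < m)%nat /\ c i = j).

Definition cell (c : nat -> nat) (j : nat) : nat -> bool := fun i => Nat.eqb (c i) j.

Definition Delta (m : nat) (d : jdist) (k : nat) (c : nat -> nat) : R :=
  (sumR (map (fun j => H m d (cell c j)) (seq 0 k)) - H m d (fun _ => true))
  / INR (k - 1).

(* singleton partition S: k = m, c = identity *)
Definition TypeS (m : nat) (d : jdist) : Prop :=
  forall (k : nat) (c : nat -> nat), is_partition m k c -> (2 <= k)%nat ->
    Delta m d m (fun i => i) <= Delta m d k c.

(* Main.v *)
Require Import Defs.
From Stdlib Require Import Reals List Arith Bool Lra Lia.
Import ListNotations.
Open Scope R_scope.

Lemma sumR_ext {T} (l : list T) f g : (forall x, In x l -> f x = g x) -> sumR (map f l) = sumR (map g l).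
Proof. induction l as [|a l IH]; simpl; intros Hfg; auto. rewrite Hfg by auto. rewrite IH; auto. Qed.

Lemma sumR_le {T} (l : list T) f g : (forall x, In x l -> f x <= g x) -> sumR (map f l) <= sumR (map g l).
Proof. induction l as [|a l IH]; simpl; intros Hfg. lra. apply Rplus_le_compat; auto. Qed.

Lemma sumR_plus {T} (l : list T) f g : sumR (map (fun x => f x + g x) l) = sumR (map f l) + sumR (map g l).
Proof. induction l as [|a l IH]; simpl; lra. Qed.

Lemma sumR_minus {T} (l : list T) f g : sumR (map (fun x => f x - g x) l) = sumR (map f l) - sumR (map g l).
Proof. induction l as [|a l IH]; simpl; lra. Qed.

Lemma sumR_scal {T} (l : list T) c f : sumR (map (fun x => c * f x) l) = c * sumR (map f l).
Proof. induction l as [|a l IH]; simpl. ring. rewrite IH; ring. Qed.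

Lemma sumR_scar {T} (l : list T) c f : sumR (map (fun x => f x * c) l) = sumR (map f l) * c.
Proof. induction l as [|a l IH]; simpl. ring. rewrite IH; ring. Qed.

Lemma sumR_const {T} (l : list T) c : sumR (map (fun _ => c) l) = INR (length l) * c.
Proof. induction l as [|a l IH]; simpl length. simpl; ring. rewrite S_INR. simpl. rewrite IH; ring. Qed.

Lemma sumR_nonneg {T} (l : list T) f : (forall x, In x l -> 0 <= f x) -> 0 <= sumR (map f l).
Proof. induction l as [|a l IH]; simpl; intros Hf. lra. apply Rplus_le_le_0_compat; auto. Qed.

Lemma sumR_swap {A B} (l1 : list A) (l2 : list B) (f : A -> B -> R) :
  sumR (map (fun a => sumR (map (fun b => f a b) l2)) l1) =
  sumR (map (fun b => sumR (map (fun a => f a b) l1)) l2).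
Proof.
  induction l1 as [|a l1 IH]; simpl.
  - induction l2 as [|b l2 IH2]; simpl; auto. rewrite <- IH2; ring.
  - rewrite IH. rewrite (sumR_plus l2 (fun b => f a b) (fun b => sumR (map (fun a0 => f a0 b) l1))). reflexivity.
Qed.

Lemma sumR_ge_elem {T} (l : list T) f a : In a l -> (forall x, In x l -> 0 <= f x) -> f a <= sumR (map f l).
Proof.
  induction l as [|b l IH]; simpl; intros Ha Hf. contradiction.
  destruct Ha as [<-|Ha].
  - assert (0 <= sumR (map f l)) by (apply sumR_nonneg; auto). lra.
  - assert (0 <= f b) by auto. assert (f a <= sumR (map f l)) by auto. lra.
Qed.

Lemma agree_spec m A f g : agree m A f g = true <-> forall i, (i < m)%nat -> A i = true -> f i = g i.
Proof.
  unfold agree. rewrite forallb_forall. split.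
  - intros Hx i Hi HA. specialize (Hx i). rewrite in_seq in Hx.
    assert (Hy := Hx (conj (Nat.le_0_l i) Hi)). rewrite HA in Hy. simpl in Hy. apply Nat.eqb_eq; auto.
  - intros Hx i Hi. rewrite in_seq in Hi. destruct (A i) eqn:E; simpl; auto. apply Nat.eqb_eq. apply Hx; auto. lia.
Qed.

Lemma agree_refl m A f : agree m A f f = true.
Proof. apply agree_spec; auto. Qed.

Lemma agree_right m A f g h : agree m A f g = true -> agree m A h f = agree m A h g.
Proof.
  intros Hfg. rewrite agree_spec in Hfg.
  destruct (agree m A h f) eqn:E1, (agree m A h g) eqn:E2; auto.
  - rewrite agree_spec in E1. assert (agree m A h g = true) as E3.
    { apply agree_spec. intros i Hi HA. rewrite E1, Hfg; auto. } congruence.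
  - rewrite agree_spec in E2. assert (agree m A h f = true) as E3.
    { apply agree_spec. intros i Hi HA. rewrite E2, Hfg; auto. } congruence.
Qed.

Lemma prob_congr m d A f g : agree m A f g = true -> prob m d A f = prob m d A g.
Proof. intros Hfg. unfold prob. apply sumR_ext. intros a _. rewrite (agree_right _ _ _ _ (snd a) Hfg). auto. Qed.

Section Ent.
Variable m : nat.
Variable d : jdist.
Hypothesis Hnn : forall a, In a d -> 0 <= fst a.
Hypothesis Hsum : sumR (map fst d) = 1.

Lemma prob_nonneg A f : 0 <= prob m d A f.
Proof. unfold prob. apply sumR_nonneg. intros a Ha. destruct agree; auto; lra. Qed.

Lemma prob_ge A a : In a d -> fst a <= prob m d A (snd a).
Proof.
  intros Ha. unfold prob.
  assert (Hg := sumR_ge_elem d (fun b => if agree m A (snd b) (snd a) then fst b else 0) a Ha).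
  simpl in Hg. rewrite agree_refl in Hg. apply Hg.
  intros x Hx. destruct agree; auto; lra.
Qed.

Lemma inv_nonneg x : 0 <= x -> 0 <= / x.
Proof. intros Hx. destruct (Req_dec x 0) as [->|Hne]. rewrite Rinv_0; lra. left; apply Rinv_0_lt_compat; lra. Qed.

Lemma xinvx x : 0 <= x -> x * / x <= 1.
Proof. intros Hx. destruct (Req_dec x 0) as [->|Hne]. rewrite Rinv_0; lra. rewrite Rinv_r; lra. Qed.

Lemma mul_sum2 {X} (l1 l2 : list X) (f g : X -> R) K :
  K * sumR (map f l1) * sumR (map g l2) =
  sumR (map (fun b => sumR (map (fun b' => K * f b * g b') l2)) l1).
Proof.
  rewrite (sumR_ext l1 (fun b => sumR (map (fun b' => K * f b * g b') l2)) (fun b => (K * f b) * sumR (map g l2))).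
  - rewrite (sumR_scar l1 (sumR (map g l2)) (fun b => K * f b)), sumR_scal. reflexivity.
  - intros b _. rewrite <- sumR_scal. reflexivity.
Qed.

Lemma Y_bound (A B U : nat -> bool) (HU : forall i, U i = A i || B i) (b b' : R * (nat -> nat)) :
  sumR (map (fun a => fst a * (if agree m A (snd b) (snd a) then 1 else 0)
     * (if agree m B (snd b') (snd a) then 1 else 0) * / prob m d U (snd a)) d) <= 1.
Proof.
  set (z := fun i => if A i then snd b i else snd b' i).
  apply Rle_trans with (sumR (map (fun a => (if agree m U (snd a) z then fst a else 0) * / prob m d U z) d)).
  - apply sumR_le. intros a Ha.
    destruct (agree m A (snd b) (snd a)) eqn:EA, (agree m B (snd b') (snd a)) eqn:EB;
      try (apply Rle_trans with 0; [right; ring |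
           apply Rmult_le_pos; [destruct (agree m U (snd a) z); [apply Hnn; exact Ha | lra] | apply inv_nonneg, prob_nonneg]]).
    assert (Haz : agree m U (snd a) z = true).
    { apply agree_spec. intros i Hi HUi. rewrite agree_spec in EA, EB. unfold z.
      rewrite HU in HUi. destruct (A i) eqn:EAi.
      - symmetry; apply EA; auto.
      - simpl in HUi. symmetry; apply EB; auto. }
    rewrite Haz. rewrite (prob_congr _ _ _ _ _ Haz). right; ring.
  - rewrite sumR_scar. apply xinvx. apply prob_nonneg.
Qed.

Lemma key_sum (A B U C : nat -> bool) (HU : forall i, U i = A i || B i)
  (HC : forall i, C i = A i && B i) :
  sumR (map (fun a => fst a * (prob m d A (snd a) * prob m d B (snd a) /
     (prob m d U (snd a) * prob m d C (snd a)))) d) <= 1.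
Proof.
  set (X := fun b b' : R * (nat -> nat) => fst b * (if agree m C (snd b') (snd b) then fst b' else 0) * / prob m d C (snd b)).
  set (Y := fun a b b' : R * (nat -> nat) => fst a * (if agree m A (snd b) (snd a) then 1 else 0)
     * (if agree m B (snd b') (snd a) then 1 else 0) * / prob m d U (snd a)).
  rewrite (sumR_ext d _ (fun a => sumR (map (fun b => sumR (map (fun b' => X b b' * Y a b b') d)) d))).
  2:{ intros a Ha.
      transitivity ((fst a / (prob m d U (snd a) * prob m d C (snd a))) * prob m d A (snd a) * prob m d B (snd a)).
      { unfold Rdiv; ring. }
      unfold prob at 3 4. rewrite mul_sum2. apply sumR_ext. intros b Hb. apply sumR_ext. intros b' Hb'.
      unfold X, Y.
      destruct (agree m A (snd b) (snd a)) eqn:EA, (agree m B (snd b') (snd a)) eqn:EB; try ring.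
      assert (ECa : agree m C (snd b) (snd a) = true).
      { rewrite agree_spec in *. intros i Hi HCi. rewrite HC in HCi. apply andb_prop in HCi.
        apply EA; tauto. }
      assert (ECb : agree m C (snd b') (snd b) = true).
      { rewrite agree_spec in *. intros i Hi HCi. rewrite (ECa i Hi HCi).
        rewrite HC in HCi. apply andb_prop in HCi. apply EB; tauto. }
      rewrite ECb. rewrite (prob_congr _ _ _ _ _ ECa). unfold Rdiv. rewrite Rinv_mult. ring. }
  rewrite sumR_swap.
  apply Rle_trans with (sumR (map (fun b => sumR (map (fun b' => X b b') d)) d)).
  - apply sumR_le. intros b Hb. rewrite sumR_swap. apply sumR_le. intros b' Hb'.
    rewrite sumR_scal.
    assert (0 <= X b b').
    { unfold X. apply Rmult_le_pos. apply Rmult_le_pos. auto. destruct agree; auto; lra.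
      apply inv_nonneg, prob_nonneg. }
    assert (sumR (map (fun a => Y a b b') d) <= 1) by (apply Y_bound; auto).
    nra.
  - rewrite <- Hsum. apply sumR_le. intros b Hb. unfold X.
    rewrite (sumR_ext d _ (fun b' => (fst b * / prob m d C (snd b)) * (if agree m C (snd b') (snd b) then fst b' else 0))) by (intros; ring).
    rewrite sumR_scal. fold (prob m d C (snd b)).
    assert (0 <= fst b) by auto.
    assert (prob m d C (snd b) * / prob m d C (snd b) <= 1) by (apply xinvx, prob_nonneg).
    nra.
Qed.

Lemma ln_le_minus1 x : 0 < x -> ln x <= x - 1.
Proof. intros Hx. assert (Hh := exp_ineq1_le (ln x)). rewrite exp_ln in Hh; lra. Qed.

Lemma submod (A B U C : nat -> bool) (HU : forall i, U i = A i || B i)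
  (HC : forall i, C i = A i && B i) :
  H m d U + H m d C <= H m d A + H m d B.
Proof.
  assert (Hk := key_sum A B U C HU HC).
  set (r := fun a : R * (nat -> nat) => prob m d A (snd a) * prob m d B (snd a) /
     (prob m d U (snd a) * prob m d C (snd a))) in Hk.
  assert (Hle : sumR (map (fun a => (fst a * ln (prob m d A (snd a)) + fst a * ln (prob m d B (snd a)))
       - (fst a * ln (prob m d U (snd a)) + fst a * ln (prob m d C (snd a)))) d)
      <= sumR (map (fun a => fst a * r a - fst a) d)).
  { apply sumR_le. intros a Ha. assert (Hp := Hnn a Ha).
    destruct (Req_dec (fst a) 0) as [E|E].
    { rewrite E. lra. }
    assert (pa : 0 < fst a) by lra.
    assert (HA := prob_ge A a Ha). assert (HB := prob_ge B a Ha).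
    assert (HU' := prob_ge U a Ha). assert (HC' := prob_ge C a Ha).
    assert (Hr : ln (r a) = ln (prob m d A (snd a)) + ln (prob m d B (snd a))
        - (ln (prob m d U (snd a)) + ln (prob m d C (snd a)))).
    { unfold r, Rdiv. rewrite ln_mult, ln_mult, ln_Rinv, ln_mult; try lra;
      try apply Rinv_0_lt_compat; apply Rmult_lt_0_compat; lra. }
    assert (Hra : 0 < r a).
    { unfold r, Rdiv. apply Rmult_lt_0_compat. apply Rmult_lt_0_compat; lra.
      apply Rinv_0_lt_compat; apply Rmult_lt_0_compat; lra. }
    assert (Hl := ln_le_minus1 (r a) Hra).
    assert (Hm : fst a * ln (r a) <= fst a * (r a - 1)) by (apply Rmult_le_compat_l; lra).
    rewrite Hr in Hm. lra. }
  rewrite sumR_minus, !sumR_plus in Hle. rewrite sumR_minus in Hle.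
  assert (Hk2 : sumR (map (fun x => fst x * r x) d) <= 1) by exact Hk. rewrite Hsum in Hle. unfold H. lra.
Qed.

End Ent.

Lemma len_filter_R {T} (f : T -> bool) (l : list T) :
  INR (length (filter f l)) = sumR (map (fun i => if f i then 1 else 0) l).
Proof. induction l as [|a l IH]; simpl. reflexivity. destruct (f a); simpl length; try rewrite S_INR; rewrite IH; ring. Qed.

Lemma ind_sum0 v len : forall a, (v < a)%nat -> sumR (map (fun j => if Nat.eqb v j then 1 else 0) (seq a len)) = 0.
Proof.
  induction len as [|len IH]; intros a Ha; simpl. reflexivity.
  rewrite IH by lia. destruct (Nat.eqb_spec v a). lia. ring.
Qed.

Lemma ind_sum1 v len : forall a, (a <= v < a + len)%nat -> sumR (map (fun j => if Nat.eqb v j then 1 else 0) (seq a len)) = 1.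
Proof.
  induction len as [|len IH]; intros a Ha; simpl. lia.
  destruct (Nat.eqb_spec v a).
  - rewrite ind_sum0 by lia. ring.
  - rewrite IH by lia. ring.
Qed.

Lemma card_R m P : INR (card m P) = sumR (map (fun i => if P i then 1 else 0) (seq 0 m)).
Proof. unfold card. apply len_filter_R. Qed.

Lemma card_prefix m s : (s <= m)%nat -> card m (fun i => Nat.ltb i s) = s.
Proof.
  intros Hs. unfold card.
  replace m with (s + (m - s))%nat by lia. rewrite seq_app, filter_app.
  rewrite (filter_ext_in _ (fun _ => true) (seq 0 s)).
  2:{ intros i Hi. rewrite in_seq in Hi. apply Nat.ltb_lt. lia. }
  rewrite (filter_ext_in _ (fun _ => false) (seq (0 + s) (m - s))).
  2:{ intros i Hi. rewrite in_seq in Hi. apply Nat.ltb_ge. lia. }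
  rewrite filter_true, filter_false, app_nil_r, length_seq. reflexivity.
Qed.

Lemma card_le m P : (card m P <= m)%nat.
Proof. unfold card. rewrite <- (length_seq m 0) at 2. apply filter_length_le. Qed.

Lemma card_true m : card m (fun _ => true) = m.
Proof. unfold card. rewrite filter_true, length_seq. reflexivity. Qed.

Lemma card_single m j : (j < m)%nat -> card m (fun i => Nat.eqb i j) = 1%nat.
Proof.
  intros Hj. apply INR_eq. rewrite card_R. simpl INR.
  rewrite (sumR_ext _ _ (fun i => if Nat.eqb j i then 1 else 0)).
  - apply ind_sum1. lia.
  - intros i _. rewrite Nat.eqb_sym. reflexivity.
Qed.

Lemma card_B m s : (s + 2 <= m)%nat -> card m (fun i => Nat.ltb i s || Nat.eqb i (s+1)) = (s+1)%nat.
Proof.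
  intros Hs. apply INR_eq. rewrite card_R.
  rewrite (sumR_ext _ _ (fun i => (if Nat.ltb i s then 1 else 0) + (if Nat.eqb (s+1) i then 1 else 0))).
  - rewrite sumR_plus, <- card_R, card_prefix, ind_sum1 by lia. rewrite plus_INR. simpl. ring.
  - intros i _. rewrite (Nat.eqb_sym (s+1) i).
    destruct (Nat.ltb_spec i s), (Nat.eqb_spec i (s+1)); simpl; try ring. lia.
Qed.

Lemma partition_sum m k c : is_partition m k c ->
  sumR (map (fun j => INR (card m (cell c j))) (seq 0 k)) = INR m.
Proof.
  intros [Hc _].
  rewrite (sumR_ext _ _ (fun j => sumR (map (fun i => if Nat.eqb (c i) j then 1 else 0) (seq 0 m)))).
  2:{ intros j _. rewrite card_R. reflexivity. }
  rewrite sumR_swap.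
  rewrite (sumR_ext _ _ (fun _ => 1)).
  - rewrite sumR_const, length_seq. ring.
  - intros i Hi. rewrite in_seq in Hi. apply ind_sum1. assert (c i < k)%nat by (apply Hc; lia). lia.
Qed.

Lemma card_cell_pos m k c j : is_partition m k c -> (j < k)%nat -> (0 < card m (cell c j))%nat.
Proof.
  intros [_ Hs] Hj. destruct (Hs j Hj) as [i [Hi Hci]].
  unfold card. destruct (filter (cell c j) (seq 0 m)) eqn:E; simpl; [|lia].
  assert (Hin : In i (filter (cell c j) (seq 0 m))).
  { apply filter_In. split. apply in_seq; lia. unfold cell. apply Nat.eqb_eq; auto. }
  rewrite E in Hin. destruct Hin.
Qed.

Section Conc.
Variable g : nat -> R.
Variable m : nat.
Hypothesis Hconc : forall s, (1 <= s)%nat -> (s + 2 <= m)%nat -> g (s+2)%nat + g s <= 2 * g (s+1)%nat.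
Let D s := g (s+1)%nat - g s.

Lemma D_dec j : forall n, (1 <= n)%nat -> (n + j + 1 <= m)%nat -> D (n + j) <= D n.
Proof.
  induction j as [|j IH]; intros n Hn Hm.
  - rewrite Nat.add_0_r. lra.
  - assert (D (n + S j) <= D (n + j)).
    { unfold D. replace (n + S j + 1)%nat with (n + j + 2)%nat by lia.
      replace (n + S j)%nat with (n + j + 1)%nat by lia.
      assert (Hc := Hconc (n + j) ltac:(lia) ltac:(lia)). lra. }
    assert (D (n + j) <= D n) by (apply IH; lia). lra.
Qed.

Lemma up_bound k : forall n, (1 <= n)%nat -> (n + k <= m)%nat -> g (n + k)%nat - g n <= INR k * D n.
Proof.
  induction k as [|k IH]; intros n Hn Hm.
  - rewrite Nat.add_0_r. simpl. lra.
  - rewrite S_INR. assert (Hd := D_dec k n Hn ltac:(lia)).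
    assert (Hi := IH n Hn ltac:(lia)).
    unfold D in Hd. replace (n + k + 1)%nat with (n + S k)%nat in Hd by lia.
    unfold D in *. lra.
Qed.

Lemma low_bound n : (1 <= n)%nat -> (n + 1 <= m)%nat -> g n - g 1 >= (INR n - 1) * D n.
Proof.
  induction n as [|n IH]; intros Hn Hm. lia.
  destruct (Nat.eq_dec n 0) as [->|Hn0].
  - simpl. lra.
  - assert (Hi := IH ltac:(lia) ltac:(lia)).
    assert (Hd : D (S n) <= D n).
    { replace (S n) with (n + 1)%nat by lia. apply (D_dec 1 n); lia. }
    rewrite S_INR.
    assert (HnR : 1 <= INR n) by (apply (le_INR 1); lia).
    assert (Hx : g (S n) - g 1 = D n + (g n - g 1)).
    { unfold D. replace (n + 1)%nat with (S n) by lia. ring. }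
    assert (INR n * D (S n) <= INR n * D n) by (apply Rmult_le_compat_l; lra).
    rewrite Hx. nra.
Qed.

Lemma interp n : (1 <= n <= m)%nat -> (INR m - 1) * g n >= (INR m - INR n) * g 1%nat + (INR n - 1) * g m.
Proof.
  intros Hn. destruct (Nat.eq_dec n m) as [->|Hne].
  - lra.
  - assert (Hu := up_bound (m - n) n ltac:(lia) ltac:(lia)).
    replace (n + (m - n))%nat with m in Hu by lia. rewrite minus_INR in Hu by lia.
    assert (Hl := low_bound n ltac:(lia) ltac:(lia)).
    assert (H1 : 1 <= INR n) by (apply (le_INR 1); lia).
    assert (H2 : INR n + 1 <= INR m) by (rewrite <- S_INR; apply le_INR; lia).
    assert (A1 : (INR m - INR n) * (g n - g 1%nat) >= (INR m - INR n) * ((INR n - 1) * D n)).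
    { apply Rle_ge, Rmult_le_compat_l; lra. }
    assert (A2 : (INR n - 1) * (g m - g n) <= (INR n - 1) * ((INR m - INR n) * D n)).
    { apply Rmult_le_compat_l; lra. }
    nra.
Qed.
End Conc.

Lemma div_le a b c e : 0 < b -> 0 < e -> a * e <= c * b -> a / b <= c / e.
Proof.
  intros Hb He Hx. unfold Rdiv. apply Rmult_le_reg_r with (b * e). nra.
  replace (a * / b * (b * e)) with (a * e) by (field; lra).
  replace (c * / e * (b * e)) with (c * b) by (field; lra). lra.
Qed.

Theorem corollary1 (m : nat) (d : jdist) (hm : (2 <= m)%nat) (hd : valid d)
  (hiso : isentropic m d) : TypeS m d.
Proof.
  destruct hd as [Hf Hs]. rewrite Forall_forall in Hf.
  set (g := fun s => H m d (fun i => Nat.ltb i s)).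
  assert (Hcard : forall P, (0 < card m P)%nat -> H m d P = g (card m P)).
  { intros P HP. unfold g. apply hiso; auto. rewrite card_prefix; auto. apply card_le. }
  assert (Hconc : forall s, (1 <= s)%nat -> (s+2 <= m)%nat -> g (s+2)%nat + g s <= 2 * g (s+1)%nat).
  { intros s _ Hs2.
    assert (Hsm := submod m d Hf Hs (fun i => Nat.ltb i (s+1)) (fun i => Nat.ltb i s || Nat.eqb i (s+1))
       (fun i => Nat.ltb i (s+2)) (fun i => Nat.ltb i s)).
    assert (HB : H m d (fun i => Nat.ltb i s || Nat.eqb i (s+1)) = g (s+1)%nat).
    { unfold g. apply hiso. rewrite card_B; lia. rewrite card_B, card_prefix; lia. }
    unfold g in *. rewrite HB in Hsm. apply Rle_trans with (H m d (fun i => Nat.ltb i (s + 2)) + H m d (fun i => Nat.ltb i s)).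
    { right; ring. }
    eapply Rle_trans. apply Hsm.
    - intros i. destruct (Nat.ltb_spec i (s+2)), (Nat.ltb_spec i (s+1)), (Nat.ltb_spec i s), (Nat.eqb_spec i (s+1)); simpl; try reflexivity; exfalso; lia.
    - intros i. destruct (Nat.ltb_spec i (s+1)), (Nat.ltb_spec i s), (Nat.eqb_spec i (s+1)); simpl; try reflexivity; exfalso; lia.
    - right; ring. }
  intros k c Hp Hk. unfold Defs.Delta.
  assert (Hid : sumR (map (fun j => H m d (cell (fun i => i) j)) (seq 0 m)) = INR m * g 1%nat).
  { rewrite (sumR_ext _ _ (fun _ => g 1%nat)).
    - rewrite sumR_const, length_seq. reflexivity.
    - intros j Hj. rewrite in_seq in Hj. unfold cell. rewrite Hcard; rewrite card_single; auto; lia. }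
  assert (Hfull : H m d (fun _ => true) = g m).
  { rewrite Hcard; rewrite card_true; auto; lia. }
  assert (Hcs : (INR m - 1) * sumR (map (fun j => H m d (cell c j)) (seq 0 k))
      >= INR k * (INR m * g 1%nat - g m) + INR m * (g m - g 1%nat)).
  { assert (Hsum1 : sumR (map (fun j => (INR m * g 1%nat - g m) + INR (card m (cell c j)) * (g m - g 1%nat)) (seq 0 k))
        = INR k * (INR m * g 1%nat - g m) + INR m * (g m - g 1%nat)).
    { rewrite sumR_plus, sumR_const, length_seq.
      rewrite (sumR_scar (seq 0 k) (g m - g 1%nat) (fun j => INR (card m (cell c j)))).
      rewrite (partition_sum m k c Hp). ring. }
    rewrite <- Hsum1.
    rewrite <- (sumR_scal (seq 0 k) (INR m - 1) (fun j => H m d (cell c j))).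
    apply Rle_ge. apply sumR_le. intros j Hj. rewrite in_seq in Hj.
    assert (Hpos := card_cell_pos m k c j Hp ltac:(lia)).
    rewrite Hcard by auto.
    assert (Hi := interp g m Hconc (card m (cell c j)) ltac:(split; [lia| apply card_le])).
    lra. }
  rewrite Hid, Hfull.
  rewrite !minus_INR by lia. simpl (INR 1).
  assert (Hm1 : 1 < INR m) by (apply (lt_INR 1); lia).
  assert (Hk1 : 1 < INR k) by (apply (lt_INR 1); lia).
  apply div_le; [lra | lra | nra].
Qed.
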